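(* Let $q$ be a prime power. Then \[ \ell(2,3,q)\leq 2\sqrt{(q+1)\ln (q+1)}+2 . \]
   Context: For integers $R,r\ge 1$ and a prime power $q$, the length function $\ell(R,r,q)$ is the smallest length $n$ of a linear code over $\mathbb{F}_q$ of length $n$, codimension $r$ (i.e. dimension $n-r$) and covering radius $R$. Here $\ln$ denotes the natural logarithm. *)

(* Defs.v *)
From mathcomp Require Import all_boot all_order all_algebra.
From Stdlib Require Import ClassicalEpsilon.
Set Implicit Arguments. Unset Strict Implicit. Unset Printing Implicit Defensive.
Import GRing.Theory.
Local Open Scope ring_scope.

(* Linear codes over a finite field F, represented (mxalgebra style) by a
   square matrix C whose row space is the code, a subspace of F^n = 'rV[F]_n. *)

Definition hweight (F : finFieldType) (n : nat) (v : 'rV[F]_n) : nat :=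
  #|[set i : 'I_n | v 0 i != 0]|.

(* Hamming distance from x to the code C: min over codewords c of wt(x - c)
   (the codeword 0 exists and any weight is <= n, so the start value n is harmless) *)
Definition dist_to_code (F : finFieldType) (n : nat) (C : 'M[F]_n) (x : 'rV[F]_n) : nat :=
  \big[minn/n]_(c : 'rV[F]_n | (c <= C)%MS) hweight (x - c).

Definition covering_radius (F : finFieldType) (n : nat) (C : 'M[F]_n) : nat :=
  \max_(x : 'rV[F]_n) dist_to_code C x.

Definition has_code (R r : nat) (F : finFieldType) (n : nat) : Prop :=
  (r <= n)%N /\
  exists C : 'M[F]_n, \rank C = (n - r)%N /\ covering_radius C = R.

(* the length function l(R, r, q), q = #|F|: the smallest such n
   (defined to be 0 if no such code exists; the main statement asserts existence) *)
Definition ell (R r : nat) (F : finFieldType) : nat :=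
  match excluded_middle_informative (exists n, has_code R r F n) with
  | left H =>
      @ex_minn (fun n => is_left (excluded_middle_informative (has_code R r F n)))
        (let: ex_intro n Hn := H in
         ex_intro _ n (match excluded_middle_informative (has_code R r F n) as b
                          return is_left b with
                       | left _ => erefl | right nH => False_ind _ (nH Hn) end))
  | right _ => 0%N
  end.

(* Main.v *)
Require Import Defs.
From mathcomp Require Import all_boot all_order all_algebra.
From Stdlib Require Import Reals.
From Stdlib Require Import NArith ZArith Lra Lia Psatz ClassicalEpsilon.
From mathcomp Require Import zify.
Import ssrnat.

Set Implicit Arguments. Unset Strict Implicit. Unset Printing Implicit Defensive.
Import GRing.Theory.
Open Scope ring_scope.

Section Code.
Variable F : finFieldType.
Local Notation T := 'rV[F]_3.

Definition cov (S : seq T) (s : T) : bool :=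
  (s == 0) || [exists a : F, exists b : F,
     has (fun y => has (fun z => s == a *: y + b *: z) S) S].

Lemma covP S s : reflect (s = 0 \/ exists a b y z, [/\ y \in S, z \in S & s = a *: y + b *: z])
  (cov S s).
Proof.
apply: (iffP orP) => [[/eqP->|/existsP[a /existsP[b /hasP[y yS /hasP[z zS /eqP E]]]]]|].
- by left.
- by right; exists a, b, y, z.
case=> [->|[a [b [y [z [yS zS E]]]]]]; first by left.
right; apply/existsP; exists a; apply/existsP; exists b.
by apply/hasP; exists y => //; apply/hasP; exists z => //; apply/eqP.
Qed.

Lemma dist_le n (C : 'M[F]_n) x c w : (c <= C)%MS -> (hweight (x - c) <= w)%N ->
  (dist_to_code C x <= w)%N.
Proof.
move=> cC hw; rewrite /dist_to_code -minEnat.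
have := @Order.TotalTheory.bigmin_le_cond _ _ _ n c (fun c => (c <= C)%MS) (fun c => hweight (x - c)) cC.
by rewrite Order.NatOrder.leEnat => /leq_trans; apply.
Qed.

Lemma dist_ge n (C : 'M[F]_n) x w : (w <= n)%N ->
  (forall c, (c <= C)%MS -> (w <= hweight (x - c))%N) ->
  (w <= dist_to_code C x)%N.
Proof.
move=> wn H; rewrite /dist_to_code.
apply: (big_ind (fun v => w <= v)%N) => //.
by move=> a b ha hb; rewrite leq_min ha hb.
Qed.

Variable S : seq T.
Local Notation n := (size S).
Definition Ht : 'M[F]_(n, 3) := \matrix_(i, j) (nth 0 S i) 0 j.

Lemma row_Ht (i : 'I_n) : row i Ht = nth 0 S i.
Proof. by apply/rowP => j; rewrite !mxE; congr (_ _ _); apply: val_inj. Qed.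

Lemma mem_Ht y : y \in S -> exists i : 'I_n, y = row i Ht.
Proof.
move=> yS; have ltn : (index y S < n)%N by rewrite index_mem.
by exists (Ordinal ltn); rewrite row_Ht /= nth_index.
Qed.

Hypothesis Hsat : forall s, cov S s.

Lemma all_sub (s : T) : (s <= Ht)%MS.
Proof.
case/covP: (Hsat s) => [->|[a [b [y [z [yS zS ->]]]]]]; first exact: sub0mx.
have [i ->] := mem_Ht yS; have [j ->] := mem_Ht zS.
by apply: addmx_sub; apply: scalemx_sub; apply: row_sub.
Qed.

Lemma Ht_full : row_full Ht.
Proof. by rewrite -sub1mx; apply/row_subP => i; apply: all_sub. Qed.

Lemma rank_Ht : \rank Ht = 3%N.
Proof. by apply/eqP; exact: Ht_full. Qed.

Lemma n_ge3 : (3 <= n)%N.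
Proof. by rewrite -{1}rank_Ht rank_leq_row. Qed.

Definition Cd : 'M[F]_n := kermx Ht.

Lemma hweight_supp (e : 'rV[F]_n) (A : {set 'I_n}) :
  (forall k, k \notin A -> e 0 k = 0) -> (hweight e <= #|A|)%N.
Proof.
move=> H; apply: subset_leq_card; apply/subsetP => k; rewrite inE.
by apply: contraR => /H ->; rewrite eqxx.
Qed.

Lemma cr_le2 : (covering_radius Cd <= 2)%N.
Proof.
apply/bigmax_leqP => x _.
case/covP: (Hsat (x *m Ht)) => [E|[a [b [y [z [yS zS E]]]]]].
  apply: (@dist_le _ _ _ x); first by rewrite sub_kermx E.
  by rewrite subrr; apply: leq_trans (hweight_supp (A := set0) _) _ => [k _|]; rewrite ?mxE ?cards0.
have [i Ei] := mem_Ht yS; have [j Ej] := mem_Ht zS.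
pose e : 'rV[F]_n := a *: delta_mx 0 i + b *: delta_mx 0 j.
apply: (@dist_le _ _ _ (x - e)).
  rewrite sub_kermx mulmxBl /e mulmxDl -!scalemxAl -!rowE -Ei -Ej -E.
  by rewrite subrr.
rewrite opprB addrC subrK.
apply: leq_trans (hweight_supp (A := [set i; j]) _) _.
  move=> k; rewrite !inE negb_or => /andP[ki kj].
  by rewrite /e !mxE (negbTE ki) (negbTE kj) !andbF !mulr0 addr0.
by rewrite cards2; case: (i != j).
Qed.

Definition multp (s : T) := [exists a : F, has (fun y => s == a *: y) S].

Lemma card_multp : (#|[set s | multp s]| <= (n * (#|F| - 1)).+1)%N.
Proof.
pose f (p : 'I_n * F) := p.2 *: nth 0 S p.1.
have sub : [set s | multp s] \subset 0 |: [set f p | p in setX [set: 'I_n] [set a : F | a != 0]].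
  apply/subsetP => s; rewrite !inE => /existsP[a /hasP[y yS /eqP E]].
  have [i Ei] := mem_Ht yS; rewrite row_Ht in Ei.
  have [a00|a0] := eqVneq a 0; first by rewrite E a00 scale0r eqxx.
  apply/orP; right; apply/imsetP; exists (i, a); first by rewrite !inE a0.
  by rewrite /f /= -Ei.
apply: leq_trans (subset_leq_card sub) _.
apply: leq_trans (leq_card_setU _ _) _; rewrite cards1 add1n ltnS.
apply: leq_trans (leq_imset_card _ _) _.
rewrite cardsX cardsT card_ord.
have -> : [set a : F | a != 0] = [set~ 0] by apply/setP => a; rewrite !inE.
by rewrite cardsC1 subn1.
Qed.

Hypothesis Hsmall : ((n * (#|F| - 1)).+1 < #|F| ^ 3)%N.

Lemma exists_nonmult : exists s0 : T, ~~ multp s0.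
Proof.
apply/existsP; rewrite -negb_forall; apply/negP => /forallP H.
have E : (#|[set s | multp s]| = #|F| ^ 3)%N.
  rewrite (_ : (#|F| ^ 3 = #|{: 'M[F]_(1,3)}|)%N) ?card_mx //.
  have -> : [set s | multp s] = [set: T] by apply/setP => s; rewrite !inE H.
  by rewrite cardsT card_mx.
by move: (leq_ltn_trans card_multp Hsmall); rewrite E ltnn.
Qed.

Lemma cr_ge2 : (2 <= covering_radius Cd)%N.
Proof.
have [s0 ns0] := exists_nonmult.
have [x Ex] := submxP (all_sub s0).
apply: leq_trans (leq_bigmax x).
apply: dist_ge; first by apply: leq_trans n_ge3.
move=> c; rewrite sub_kermx => /eqP cH.
rewrite leqNgt; apply/negP => hw.
have Es : (x - c) *m Ht = s0 by rewrite mulmxBl cH subr0 -Ex.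
set e := x - c in hw Es.
have [i Hi] : exists i : 'I_n, forall k, k != i -> e 0 k = 0.
  case: (pickP (fun k => e 0 k != 0)) => [i ei|none].
    exists i => k ki; apply/eqP; apply: contraNT ki => ek.
    move: hw; rewrite ltnS /hweight.
    move/card_le1P => /(_ i); rewrite inE ei => /(_ isT k); rewrite !inE ek.
    by move/esym.
  have n0 : (0 < n)%N by apply: leq_trans n_ge3.
  by exists (Ordinal n0) => k _; apply/eqP; move: (none k) => /negbFE.
have : s0 = e 0 i *: nth 0 S i.
  rewrite -Es mulmx_sum_row (bigD1 i) //= big1 ?addr0 ?row_Ht //.
  by move=> k ki; rewrite Hi ?scale0r.
move=> E; move: ns0; rewrite /multp; apply/negP/negPn/existsP; exists (e 0 i).
by apply/hasP; exists (nth 0 S i); [apply: mem_nth | rewrite E].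
Qed.

Lemma code_ok : has_code 2 3 F n.
Proof.
split; first exact: n_ge3.
exists Cd; split; first by rewrite /Cd mxrank_ker rank_Ht.
by apply/eqP; rewrite eqn_leq cr_le2 cr_ge2.
Qed.
End Code.

Section Greedy.
Variable F : finFieldType.
Local Notation T := 'rV[F]_3.
Local Notation q := #|F|.
Local Notation cov := (@cov F).

Lemma q_ge2 : (1 < q)%N.
Proof.
have : #|[set (0 : F); 1]| = 2%N by rewrite cards2 eq_sym oner_neq0.
by move=> <-; apply: subset_leq_card; apply/subsetP => x.
Qed.

Definition uset (S : seq T) := [set s : T | ~~ cov S s].

Definition inv (S : seq T) : Prop :=
  [/\ uniq S, forall y, y \in S -> y != 0 &
      forall y z a, y \in S -> z \in S -> y != z -> y != a *: z].

Lemma cov_cons S x s : cov S s -> cov (x :: S) s.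
Proof.
case/covP => [->|[a [b [y [z [yS zS E]]]]]]; apply/covP; first by left.
by right; exists a, b, y, z; rewrite !inE yS zS !orbT.
Qed.

Lemma cov_red S x s : (x = 0 \/ exists y a, y \in S /\ x = a *: y) ->
  cov (x :: S) s -> cov S s.
Proof.
move=> Hx /covP [->|[a [b [y [z [yS zS E]]]]]]; apply/covP; first by left.
have Hw : forall (w : T) (c : F), w \in x :: S ->
    exists w' c', (w' \in S /\ c *: w = c' *: w') \/ c *: w = 0.
  move=> w c; rewrite inE => /orP[/eqP->|wS]; last by exists w, c; left.
  case: Hx => [->|[y' [a' [y'S ->]]]]; first by exists x, 0; right; rewrite scaler0.
  by exists y', (c * a'); left; rewrite scalerA.
have [y' [a' [[y'S Ey]|Ey]]] := Hw y a yS; have [z' [b' [[z'S Ez]|Ez]]] := Hw z b zS.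
- by right; exists a', b', y', z'; rewrite E Ey Ez.
- by right; exists a', 0, y', y'; rewrite E Ey Ez scale0r.
- by right; exists 0, b', z', z'; rewrite E Ey Ez scale0r.
- by left; rewrite E Ey Ez addr0.
Qed.

Lemma uset_ne0 S s : s \in uset S -> s != 0.
Proof. by rewrite inE; apply: contra => /eqP->; apply/covP; left. Qed.

Lemma cov_scale S s a : a != 0 -> cov S (a *: s) -> cov S s.
Proof.
move=> a0 /covP [E|[b [c [y [z [yS zS E]]]]]]; apply/covP.
  by left; move/eqP: E; rewrite scaler_eq0 (negbTE a0) => /eqP.
right; exists (a^-1 * b), (a^-1 * c), y, z; split => //.
by rewrite -!scalerA -scalerDr -E scalerA mulVf // scale1r.
Qed.

Lemma cov_of S s y c : y \in S -> s = c *: y -> cov S s.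
Proof. by move=> yS E; apply/covP; right; exists c, 0, y, y; rewrite scale0r addr0. Qed.

Lemma cov_of2 S s y z c d : y \in S -> z \in S -> s = c *: y + d *: z -> cov S s.
Proof. by move=> yS zS E; apply/covP; right; exists c, d, y, z. Qed.

Lemma solve_lin (s u v : T) (c d e : F) : c *: s = d *: u + e *: v -> c != 0 ->
  s = (c^-1 * d) *: u + (c^-1 * e) *: v.
Proof. by move=> E c0; rewrite -!scalerA -scalerDr -E scalerA mulVf // scale1r. Qed.

Definition NZ := [set a : F | a != 0].

Lemma card_NZ : #|NZ| = (q - 1)%N.
Proof.
have -> : NZ = [set~ 0] by apply/setP => a; rewrite !inE.
by rewrite cardsC1 subn1.
Qed.

Section Count.
Variables (S : seq T) (s : T).
Hypothesis HS : inv S.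
Hypothesis Hs : s \in uset S.

Definition Dom : {set F * option (T * F)} :=
  setX NZ (None |: [set Some p | p in setX [set h | h \in S] NZ]).

Definition fD (p : F * option (T * F)) : T :=
  match p.2 with None => p.1 *: s | Some hb => p.1 *: (s + hb.2 *: hb.1) end.

Lemma card_Dom : #|Dom| = ((q - 1) * ((size S) * (q - 1)).+1)%N.
Proof.
case: HS => uS _ _.
rewrite /Dom cardsX card_NZ cardsU1 card_imset; last by move=> a b [].
rewrite cardsX card_NZ cardsE (card_uniqP uS).
have -> : None \notin [set Some p | p in setX [set h | h \in S] NZ].
  by apply/imsetP => -[].
by rewrite add1n.
Qed.

Lemma sNC : ~~ cov S s.
Proof. by move: Hs; rewrite inE. Qed.

Lemma fD_inj : {in Dom &, injective fD}.
Proof.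
case: HS => uS nzS indS.
have s0 := uset_ne0 Hs.
move=> [a o] [a' o']; rewrite !inE /= => /andP[a0 Ho] /andP[a'0 Ho'].
rewrite /fD /=.
case: o Ho => [[h b]|] Ho; case: o' Ho' => [[h' b']|] Ho'.
- move: Ho Ho' => /imsetP [[h1 b1]] /setXP [] /[!inE] + + [Eh Eb]; move: Eh Eb => /= Eh Eb; rewrite -Eh -Eb => hS b0.
  move=> /imsetP [[h2 b2]] /setXP [] /[!inE] + + [Eh' Eb']; move: Eh' Eb' => /= Eh' Eb'; rewrite -Eh' -Eb' => h'S b'0.
  rewrite !scalerDr !scalerA => E.
  have [aa'|aa'] := eqVneq a a'.
    move: E; rewrite -aa' => /addrI E.
    have [hh'|hh'] := eqVneq h h'.
      move: E; rewrite -hh' => /eqP; rewrite -subr_eq0 -scalerBl scaler_eq0.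
      have hn0 := nzS h hS; rewrite (negbTE hn0) orbF subr_eq0 => /eqP /(mulfI a0) ->.
      by rewrite hh'.
    exfalso; move/negP: (indS h h' ((a * b)^-1 * (a * b')) hS h'S hh'); apply.
    by rewrite -scalerA -E scalerA mulVf ?scale1r // mulf_neq0.
  exfalso; move/negP: sNC; apply.
  have Ea := canRL (addrK _) E.
  have E2 : (a - a') *: s = (a' * b') *: h' + (- (a * b)) *: h.
    by rewrite scalerBl Ea addrAC [a' *: s + _]addrC addrK scaleNr.
  apply: (cov_of2 h'S hS (solve_lin E2 _)).
  by rewrite subr_eq0.
- move: Ho => /imsetP [[h1 b1]] /setXP [] /[!inE] + + [Eh Eb]; move: Eh Eb => /= Eh Eb; rewrite -Eh -Eb => hS b0.
  rewrite scalerDr scalerA => E.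
  have [aa'|aa'] := eqVneq a a'.
    move: E; rewrite -aa' -{2}(addr0 (a *: s)) => /addrI /eqP.
    by rewrite scaler_eq0 mulf_eq0 (negbTE a0) (negbTE b0) (negbTE (nzS _ hS)).
  exfalso; move/negP: sNC; apply.
  have Ea := canRL (addrK _) E.
  have E2 : (a - a') *: s = (- (a * b)) *: h + 0 *: h.
    by rewrite scalerBl Ea scale0r addr0 addrAC subrr add0r scaleNr.
  apply: (cov_of2 hS hS (solve_lin E2 _)).
  by rewrite subr_eq0.
- move: Ho' => /imsetP [[h1 b1]] /setXP [] /[!inE] + + [Eh Eb]; move: Eh Eb => /= Eh Eb; rewrite -Eh -Eb => hS b0.
  rewrite scalerDr scalerA => E.
  have [aa'|aa'] := eqVneq a a'.
    move: E; rewrite -aa' -{1}(addr0 (a *: s)) => /addrI /eqP.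
    by rewrite eq_sym scaler_eq0 mulf_eq0 (negbTE a0) (negbTE b0) (negbTE (nzS _ hS)).
  exfalso; move/negP: sNC; apply.
  have E2 : (a - a') *: s = (a' * b') *: h' + 0 *: h'.
    by rewrite scalerBl E scale0r addr0 [a' *: s + _]addrC addrK.
  apply: (cov_of2 hS hS (solve_lin E2 _)).
  by rewrite subr_eq0.
- move=> /eqP; rewrite -subr_eq0 -scalerBl scaler_eq0 (negbTE s0) orbF subr_eq0.
  by move/eqP->.
Qed.

Lemma fD_cov : [set fD p | p in Dom] \subset [set x | cov (x :: S) s].
Proof.
case: HS => uS nzS indS.
apply/subsetP => _ /imsetP [[a o] /setXP [a0 Ho] ->]; move: a0; rewrite /NZ inE => a0.
rewrite inE /fD /=.
case: o Ho => [[h b]|] Ho.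
  move: Ho => /setU1P [//|/imsetP [[h1 b1]] /setXP [] /[!inE] + + [Eh Eb]]; move: Eh Eb => /= Eh Eb; rewrite -Eh -Eb => hS b0.
  apply: (@cov_of2 _ _ (a *: (s + b *: h)) h a^-1 (- b)).
  - by rewrite inE eqxx.
  - by rewrite inE hS orbT.
  by rewrite scalerA mulVf // scale1r scaleNr addrK.
apply: (@cov_of _ _ (a *: s) a^-1); first by rewrite inE eqxx.
by rewrite scalerA mulVf // scale1r.
Qed.

Lemma count_cov : ((q - 1) * ((size S) * (q - 1)).+1 <= #|[set x | cov (x :: S) s]|)%N.
Proof.
rewrite -card_Dom -(card_in_imset fD_inj).
exact: subset_leq_card fD_cov.
Qed.

End Count.
End Greedy.

Definition cK (q k : nat) := ((q - 1) * (k * (q - 1)).+1)%N.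
Fixpoint Vseq (q k : nat) : nat :=
  if k is k'.+1 then (Vseq q k' * (q ^ 3 - cK q k')) %/ q ^ 3 else (q ^ 3 - 1)%N.

Section Step.
Variable F : finFieldType.
Local Notation T := 'rV[F]_3.
Local Notation q := #|F|.
Local Notation cov := (@cov F).
Local Notation uset := (@uset F).
Local Notation inv := (@inv F).

Lemma card_sep (A : {set T}) (P : pred T) :
  #|[set s in A | P s]| = (\sum_(s in A) (P s : nat))%N.
Proof.
rewrite -sum1dep_card big_mkcondr /=.
by apply: eq_bigr => s _; case: (P s).
Qed.

Lemma card_T : #|T| = (q ^ 3)%N.
Proof. by rewrite card_mx mul1n. Qed.

Section S1.
Variable S : seq T.
Hypothesis HS : inv S.

Definition gain x := #|[set s in uset S | cov (x :: S) s]|.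

Lemma card_split x : (#|uset (x :: S)| + gain x)%N = #|uset S|.
Proof.
rewrite /gain -(cardsID [set s | cov (x :: S) s] (uset S)) addnC.
congr (_ + _)%N; first by apply: eq_card => s; rewrite !inE.
apply: eq_card => s; rewrite !inE.
by case Hc: (cov S s); rewrite ?(cov_cons x Hc) ?andbF ?andbT.
Qed.

Lemma sum_gain : (\sum_x gain x = \sum_(s in uset S) #|[set x | cov (x :: S) s]|)%N.
Proof.
rewrite /gain.
under eq_bigr do rewrite card_sep.
rewrite exchange_big /=; apply: eq_bigr => s _.
rewrite -sum1dep_card [RHS]big_mkcond /=; apply: eq_bigr => x _.
by case: (cov _ _).
Qed.

Lemma sum_gain_ge : (#|uset S| * cK q (size S) <= \sum_x gain x)%N.
Proof.
rewrite sum_gain -sum_nat_const; apply: leq_sum => s sU.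
exact: count_cov.
Qed.

Lemma cK_gt0 k : (0 < cK q k)%N.
Proof. by rewrite /cK muln_gt0 subn_gt0 q_ge2. Qed.

Lemma good_x x s : s \in uset S -> cov (x :: S) s ->
  x != 0 /\ forall y a, y \in S -> x != a *: y.
Proof.
move=> sU cx; have ncs : ~~ cov S s by move: sU; rewrite inE.
split.
  by apply/negP => /eqP x0; move/negP: ncs; apply; apply: (cov_red (x := x)) => //; left.
move=> y a yS; apply/negP => /eqP xa; move/negP: ncs; apply.
by apply: (cov_red (x := x)) => //; right; exists y, a.
Qed.

Lemma inv_cons x : x != 0 -> (forall y a, y \in S -> x != a *: y) -> inv (x :: S).
Proof.
case: HS => uS nzS indS x0 Hx; split.
- rewrite cons_uniq uS andbT; apply/negP => xS.
  by move: (Hx x 1 xS); rewrite scale1r eqxx.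
- by move=> y; rewrite inE => /orP[/eqP->|/nzS].
move=> y z a; rewrite !inE => /orP[/eqP->|yS] /orP[/eqP->|zS].
- by rewrite eqxx.
- by move=> _; apply: Hx.
- move=> _; have [->|a0] := eqVneq a 0; first by rewrite scale0r nzS.
  apply/negP => /eqP E; move: (Hx y a^-1 yS).
  by rewrite E scalerA mulVf // scale1r eqxx.
- exact: indS.
Qed.

Lemma step : (0 < #|uset S|)%N -> exists x, inv (x :: S) /\
  (#|uset (x :: S)| * q ^ 3 <= #|uset S| * (q ^ 3 - cK q (size S)))%N.
Proof.
move=> U0.
case: (@arg_maxnP _ (0 : T) predT gain isT) => x _ Hmax.
have Hle : (#|uset S| * cK q (size S) <= q ^ 3 * gain x)%N.
  apply: leq_trans sum_gain_ge _.
  rewrite -card_T -sum_nat_const; apply: leq_sum => y _; exact: Hmax.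
have g0 : (0 < gain x)%N.
  have : (0 < q ^ 3 * gain x)%N by apply: leq_trans Hle; rewrite muln_gt0 U0 cK_gt0.
  by rewrite muln_gt0 => /andP[].
have [s] : exists s, s \in [set s in uset S | cov (x :: S) s].
  by apply/set0Pn; rewrite -card_gt0.
rewrite inE => /andP[sU cx].
have [x0 Hx] := good_x sU cx.
exists x; split; first exact: inv_cons.
have E : #|uset (x :: S)| = (#|uset S| - gain x)%N by rewrite -(card_split x) addnK.
rewrite E mulnBl mulnBr.
by apply: leq_sub2l; rewrite (mulnC (gain x)).
Qed.
End S1.

Lemma uset_nil : #|uset [::]| = (q ^ 3 - 1)%N.
Proof.
have -> : uset [::] = [set~ 0].
  apply/setP => s; rewrite !inE /cov /=.
  case: (s == 0) => //=; apply/negP => /existsP [a /existsP [b]] //.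
by rewrite cardsC1 card_T subn1.
Qed.

Lemma greedy k : exists S, [/\ inv S, (#|uset S| <= Vseq q k)%N &
  (size S = k \/ (#|uset S| = 0%N /\ (size S <= k)%N))].
Proof.
elim: k => [|k [S [HS HU Hsz]]].
  exists [::]; split; [split => // | by rewrite uset_nil | by left].
have [U0|Upos] := posnP #|uset S|.
  exists S; split => //; first by rewrite U0.
  by right; split => //; case: Hsz => [->|[_ H]]; [exact: leqnSn | exact: leqW].
have szk : size S = k by case: Hsz => // -[U00]; rewrite U00 in Upos.
have [x [Hinv Hle]] := step HS Upos.
exists (x :: S); split => //=; last by left; rewrite szk.
rewrite leq_divRL; last by rewrite expn_gt0 (leq_trans _ (@q_ge2 F)).
apply: leq_trans Hle _; rewrite szk leq_mul2r; apply/orP; right; exact: HU.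
Qed.

Lemma uset_closed S s a : s \in uset S -> a != 0 -> a *: s \in uset S.
Proof. by rewrite !inE => ns a0; apply: contra ns => /cov_scale; apply. Qed.

Lemma scale_set_card (s : T) : s != 0 -> #|[set a *: s | a in NZ F]| = (q - 1)%N.
Proof.
move=> s0; rewrite card_in_imset ?card_NZ // => a b _ _ /eqP.
by rewrite -subr_eq0 -scalerBl scaler_eq0 (negbTE s0) orbF subr_eq0 => /eqP.
Qed.

Lemma U_small S : (#|uset S| < q - 1)%N -> #|uset S| = 0%N.
Proof.
move=> H; apply/eqP; rewrite cards_eq0; apply/negPn/set0Pn => -[s sU].
move: H; rewrite ltnNge => /negP; apply.
rewrite -(scale_set_card (uset_ne0 sU)); apply: subset_leq_card.
apply/subsetP => _ /imsetP [a a0 ->]; move: a0; rewrite /NZ inE => a0.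
exact: uset_closed.
Qed.

Lemma final S : (#|uset S| < 2 * (q - 1))%N -> exists S',
  (size S' <= (size S).+1)%N /\ forall s, cov S' s.
Proof.
move=> HU.
suff [S' [Hs H0]] : exists S', (size S' <= (size S).+1)%N /\ #|uset S'| = 0%N.
  exists S'; split => // s; apply/negPn/negP => ns.
  have : s \in uset S' by rewrite inE.
  by move/eqP: H0; rewrite cards_eq0 => /eqP ->; rewrite inE.
have [U0|Upos] := posnP #|uset S|; first by exists S; split.
have [s sU] : exists s, s \in uset S by apply/set0Pn; rewrite -card_gt0.
exists (s :: S); split => //; apply: U_small.
have Hg : (q - 1 <= gain S s)%N.
  rewrite -(scale_set_card (uset_ne0 sU)); apply: subset_leq_card.
  apply/subsetP => _ /imsetP [a a0 ->]; move: a0; rewrite /NZ inE => a0.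
  rewrite inE uset_closed //=; apply: (cov_of (y := s)); first by rewrite inE eqxx.
  by [].
have := card_split S s; move: HU Hg; rewrite mul2n -addnn => H1 H2 H3.
rewrite -H3 in H1; rewrite -(ltn_add2r (gain S s)); apply: (leq_trans H1).
by rewrite leq_add2l.
Qed.
End Step.

Close Scope ring_scope.
Unset Implicit Arguments. Set Strict Implicit. Set Printing Implicit Defensive.

Definition cKN (q k : N) : N := ((q - 1) * (k * (q - 1) + 1))%num.
Fixpoint VN (q : N) (k : nat) : N :=
  match k with
  | O => (q ^ 3 - 1)%num
  | S k' => (VN q k' * (q ^ 3 - cKN q (N.of_nat k')) / q ^ 3)%num
  end.

Lemma exp3 (q : nat) : q ^ 3 = Nat.pow q 3.
Proof. by rewrite !expnS expn0 /= !mulnE. Qed.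

Lemma divn_div m d : m %/ d = Nat.div m d.
Proof.
case: d => [|d]; first by rewrite divn0.
apply: (Nat.div_unique m d.+1 (m %/ d.+1) (m %% d.+1)).
  by apply/ltP; rewrite ltn_pmod.
by rewrite {1}(divn_eq m d.+1) mulnC addnE mulnE.
Qed.

Lemma N2n_pow3 (q : N) : N.to_nat (q ^ 3) = Nat.pow (N.to_nat q) 3.
Proof. by rewrite N2Nat.inj_pow. Qed.

Lemma Vseq_VN q k : Vseq q k = N.to_nat (VN (N.of_nat q) k).
Proof.
elim: k => [|k IH] /=.
  by rewrite N2Nat.inj_sub N2n_pow3 Nat2N.id exp3 subnE.
rewrite IH N2Nat.inj_div N2Nat.inj_mul N2Nat.inj_sub N2n_pow3 Nat2N.id -exp3 divn_div.
congr (Nat.div (_ * _) _); rewrite subnE; congr (_ - _)%coq_nat.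
rewrite /cK /cKN N2Nat.inj_mul N2Nat.inj_add N2Nat.inj_mul N2Nat.inj_sub !Nat2N.id.
by rewrite /= -subnE -mulnE -addnE addn1.
Qed.

Fixpoint findm (q V : N) (k fuel : nat) : nat :=
  if (V <? 2 * (q - 1))%num then k else
  match fuel with
  | O => k
  | S f => findm q (V * (q ^ 3 - cKN q (N.of_nat k)) / q ^ 3)%num (S k) f
  end.

Definition expcheck (q : Z) (m : nat) : bool :=
  let A := ((Z.of_nat m - 1) ^ 2)%Z in
  let P := (64 * (4 * (q + 1)))%Z in
  (Z.of_nat m <=? 1)%Z || ((A <? P)%Z && (P ^ 64 <=? (q + 1) * (P - A) ^ 64)%Z).

Definition check (q : N) : bool :=
  let m := findm q (q ^ 3 - 1)%num 0 300 in
  [&& (VN q m <? 2 * (q - 1))%num, ((N.of_nat m + 1) * (q - 1) + 1 <? q ^ 3)%num &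
      expcheck (Z.of_N q) m].

Lemma checks_ok : all (fun i => check (N.of_nat i)) (iota 2 398).
Proof. vm_compute. reflexivity. Qed.

Open Scope R_scope.


Lemma exp_le_mono x y : x <= y -> exp x <= exp y.
Proof. by move=> [H|->]; [left; apply: exp_increasing | right]. Qed.

Lemma le_ln a b : 0 < b -> exp a <= b -> a <= ln b.
Proof.
move=> b0 H; apply: Rnot_lt_le => Hlt.
have := exp_increasing _ _ Hlt; rewrite exp_ln //; lra.
Qed.

Lemma exp_INR_mul (n : nat) y : exp (INR n * y) = exp y ^ n.
Proof.
elim: n => [|n IH]; first by rewrite /= Rmult_0_l exp_0.
by rewrite S_INR Rmult_plus_distr_r Rmult_1_l exp_plus IH /=; ring.
Qed.

Lemma exp_bound x (n : nat) : (0 < n)%nat -> 0 <= x -> x < INR n ->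
  exp x * (1 - x / INR n) ^ n <= 1.
Proof.
move=> n0 x0 xn.
have n0' : 0 < INR n by apply: lt_0_INR; apply/ltP.
set y := x / INR n.
have Ex : x = INR n * y by rewrite /y; field; lra.
have y0 : 0 <= y by rewrite /y; apply: Rmult_le_pos => //; left; apply: Rinv_0_lt_compat.
have y1 : y < 1 by clearbody y; nra.
rewrite Ex exp_INR_mul -Rpow_mult_distr.
apply: (Rle_trans _ (1 ^ n)); last by rewrite pow1; lra.
apply: pow_incr; split.
  by apply: Rmult_le_pos; [exact: (Rlt_le _ _ (exp_pos y)) | lra].
have := exp_ineq1_le (- y); rewrite exp_Ropp => H.
have ey := exp_pos y.
have : (1 - y) * exp y <= 1.
  have : (1 - y) <= / exp y by lra.
  move=> H2; have := Rmult_le_compat_r (exp y) _ _ (Rlt_le _ _ ey) H2.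
  by rewrite Rinv_l; [|lra].
lra.
Qed.

Lemma ln_ge0 b : 1 <= b -> 0 <= ln b.
Proof. by move=> H; apply: le_ln; [lra | rewrite exp_0]. Qed.

Lemma le_2sqrt a X : 0 <= X -> a ^ 2 <= 4 * X -> a <= 2 * sqrt X.
Proof.
move=> X0 H; have s0 := sqrt_pos X; have ss := sqrt_sqrt X X0.
nra.
Qed.

Lemma exp_check_abs (Qp a P : R) : 1 <= Qp -> P = 256 * Qp -> a ^ 2 < P ->
  P ^ 64 <= Qp * (P - a ^ 2) ^ 64 -> a ^ 2 <= 4 * Qp * ln Qp.
Proof.
move=> Qp1 EP H1 H2.
have P0 : 0 < P by lra.
have a20 : 0 <= a ^ 2 by apply: pow2_ge_0.
set x := a ^ 2 / (4 * Qp).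
have Hx0 : 0 <= x by rewrite /x; apply: Rmult_le_pos => //; left; apply: Rinv_0_lt_compat; lra.
have Hxa : a ^ 2 = 4 * Qp * x by rewrite /x; field; lra.
have E64 : INR 64 = 64 by rewrite INR_IZR_INZ.
have Hx64 : x < INR 64.
  rewrite E64; clear -H1 Hxa Qp1 EP.
  have : 4 * Qp * x < 4 * Qp * 64 by rewrite -Hxa; lra.
  move=> H; apply: (Rmult_lt_reg_l (4 * Qp)) => //; lra.
have := @exp_bound x 64 isT Hx0 Hx64.
have E1 : 1 - x / INR 64 = (P - a ^ 2) / P by rewrite EP Hxa E64; field; lra.
rewrite E1 /Rdiv Rpow_mult_distr pow_inv => Hb.
have Pa0 : 0 < (P - a ^ 2) ^ 64 by apply: pow_lt; lra.
have PP0 : 0 < P ^ 64 by apply: pow_lt.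
move: Hb H2 PP0 Pa0; generalize (P ^ 64) ((P - a ^ 2) ^ 64) => B1 B2 Hb H2 PP0 Pa0.
have Hexp : exp x <= Qp.
  have H3 : exp x * B2 <= B1.
    have := Rmult_le_compat_r B1 _ _ (Rlt_le _ _ PP0) Hb.
    by rewrite Rmult_1_l Rmult_assoc Rmult_assoc Rinv_l; [rewrite Rmult_1_r | lra].
  have H4 : exp x * B2 <= Qp * B2 by apply: Rle_trans H3 H2.
  by apply: (Rmult_le_reg_r _ _ _ Pa0).
have Hl : x <= ln Qp by apply: le_ln => //; lra.
rewrite Hxa; have := ln_ge0 _ Qp1; clear -Hl Qp1; nra.
Qed.

Lemma check_real q m : expcheck (Z.of_nat q) m = true ->
  INR m.+1 <= 2 * sqrt ((INR q + 1) * ln (INR q + 1)) + 2.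
Proof.
have q0 : 0 <= INR q by apply: pos_INR.
have hs := sqrt_pos ((INR q + 1) * ln (INR q + 1)).
rewrite /expcheck => /orP [/Z.leb_le Hm|/andP [/Z.ltb_lt H1 /Z.leb_le H2]].
  have : (m <= 1)%coq_nat by lia.
  by move/le_INR => H; rewrite S_INR; simpl INR in H; lra.
set Qp := INR q + 1.
have Qp1 : 1 <= Qp by rewrite /Qp; lra.
set a := INR m - 1.
have Ea : IZR (Z.of_nat m - 1) = a by rewrite minus_IZR -INR_IZR_INZ.
have EQ : IZR (Z.of_nat q + 1) = Qp by rewrite plus_IZR -INR_IZR_INZ.
have pw64 : forall z, IZR (z ^ 64) = IZR z ^ 64 by move=> z; rewrite (pow_IZR z 64).
have pw2 : forall z, IZR (z ^ 2) = IZR z ^ 2 by move=> z; rewrite (pow_IZR z 2).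
move: H1 H2.
set zq := Z.of_nat q; set zm := Z.of_nat m.
set Pz := (64 * (4 * (zq + 1)))%Z; set Az := ((zm - 1) ^ 2)%Z.
have EP : IZR Pz = 256 * Qp.
  rewrite /Pz mult_IZR mult_IZR plus_IZR /zq -INR_IZR_INZ /Qp; lra.
have EA : IZR Az = a ^ 2 by rewrite /Az pw2 minus_IZR /zm -INR_IZR_INZ.
have Eq1 : IZR (zq + 1) = Qp by rewrite plus_IZR /zq -INR_IZR_INZ.
move=> /IZR_lt H1 /IZR_le H2.
rewrite EP EA in H1.
rewrite pw64 mult_IZR pw64 minus_IZR EP EA Eq1 in H2.
have := @exp_check_abs Qp a (256 * Qp) Qp1 erefl H1 H2.
move=> Ha.
have : a <= 2 * sqrt (Qp * ln Qp).
  apply: le_2sqrt; first by apply: Rmult_le_pos; [lra | apply: ln_ge0].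
  by rewrite Rmult_assoc in Ha.
rewrite S_INR /a; lra.
Qed.


Lemma exp069 : exp (69 / 100) < 2.
Proof.
have H := @exp_bound (69/100) 128 isT ltac:(lra) ltac:(rewrite INR_IZR_INZ /=; lra).
have E : 1 - 69 / 100 / INR 128 = IZR 12731 / IZR 12800.
  by rewrite INR_IZR_INZ /=; field.
rewrite E /Rdiv Rpow_mult_distr pow_inv !pow_IZR in H.
have Z1 : (12800 ^ Z.of_nat 128 < 2 * 12731 ^ Z.of_nat 128)%Z by vm_compute.
move/IZR_lt: Z1; rewrite mult_IZR.
have P1 : 0 < IZR (12800 ^ Z.of_nat 128) by apply: IZR_lt; vm_compute.
have P2 : 0 < IZR (12731 ^ Z.of_nat 128) by apply: IZR_lt; vm_compute.
move: H P1 P2; generalize (IZR (12800 ^ Z.of_nat 128)) (IZR (12731 ^ Z.of_nat 128)).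
move=> B1 B2 H P1 P2 Z1.
have ex := exp_pos (69/100).
have H2 : exp (69/100) * B2 <= B1.
  have := Rmult_le_compat_r B1 _ _ (Rlt_le _ _ P1) H.
  by rewrite Rmult_1_l Rmult_assoc Rmult_assoc Rinv_l; [rewrite Rmult_1_r | lra].
nra.
Qed.

Lemma INR_divn a b : (0 < b)%N -> INR (a %/ b) <= INR a / INR b.
Proof.
move=> b0.
have bp : 0 < INR b by apply: lt_0_INR; apply/ltP.
have H : INR (a %/ b) * INR b <= INR a.
  rewrite -mult_INR; apply: le_INR; apply/leP.
  by rewrite -mulnE leq_divM.
apply: (Rmult_le_reg_r (INR b)) => //.
by rewrite /Rdiv Rmult_assoc Rinv_l; [rewrite Rmult_1_r | lra].
Qed.

Lemma INR_sub_exp (Qn c : nat) : (0 < Qn)%N ->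
  INR (Qn - c) <= INR Qn * exp (- (INR c / INR Qn)).
Proof.
move=> Q0; have Qp : 0 < INR Qn by apply: lt_0_INR; apply/ltP.
have ee := exp_pos (- (INR c / INR Qn)).
case: (leqP c Qn) => Hc.
  rewrite subnE minus_INR; last by apply/leP.
  have := exp_ineq1_le (- (INR c / INR Qn)) => H.
  have : INR Qn * (1 + - (INR c / INR Qn)) <= INR Qn * exp (- (INR c / INR Qn)).
    by apply: Rmult_le_compat_l; lra.
  have -> : INR Qn * (1 + - (INR c / INR Qn)) = INR Qn - INR c by field; lra.
  by [].
have -> : (Qn - c)%N = 0%N by apply/eqP; rewrite subn_eq0 ltnW.
by rewrite /=; apply: Rmult_le_pos; lra.
Qed.

Lemma INR_exp3 q : INR (q ^ 3) = INR q ^ 3.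
Proof. by rewrite exp3 pow_INR. Qed.

Lemma INR_cK q k : (1 <= q)%N -> INR (cK q k) = (INR q - 1) * (INR k * (INR q - 1) + 1).
Proof.
move=> q1; rewrite /cK.
have E1 : ((q - 1) * (k * (q - 1)).+1)%N = Nat.mul (Nat.sub q 1) (S (Nat.mul k (Nat.sub q 1))).
  by rewrite -mulnE -subnE.
have q1' : (1 <= q)%coq_nat by apply/leP.
by rewrite E1 mult_INR S_INR mult_INR minus_INR.
Qed.

Definition Eexp (q k : nat) : R :=
  (INR q - 1) ^ 2 * (INR k * (INR k - 1)) / (2 * INR q ^ 3).

Lemma Vseq_real q k : (1 <= q)%N -> INR (Vseq q k) <= INR q ^ 3 * exp (- Eexp q k).
Proof.
move=> q1.
have Qp : 1 <= INR q by have := le_INR 1 q (elimT leP q1).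
have Q3 : 0 < INR q ^ 3 by apply: pow_lt; lra.
have q3 : (0 < q ^ 3)%N by rewrite expn_gt0 q1.
elim: k => [|k IH].
  change (INR (q ^ 3 - 1)%N <= INR q ^ 3 * exp (- Eexp q 0)).
  rewrite /Eexp (_ : INR 0 = 0) // Rmult_0_l Rmult_0_r /Rdiv Rmult_0_l Ropp_0 exp_0 Rmult_1_r.
  rewrite -INR_exp3; apply: le_INR; apply/leP; exact: leq_subr.
change (INR ((Vseq q k * (q ^ 3 - cK q k)) %/ q ^ 3) <= INR q ^ 3 * exp (- Eexp q k.+1)).
apply: Rle_trans (@INR_divn _ _ q3) _.
rewrite mult_INR INR_exp3.
have Hs := @INR_sub_exp _ (cK q k) q3.
rewrite INR_exp3 INR_cK // in Hs.
have V0 : 0 <= INR (Vseq q k) by apply: pos_INR.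
set c := (INR q - 1) * (INR k * (INR q - 1) + 1) in Hs.
have step1 : INR (Vseq q k) * INR (q ^ 3 - cK q k) / INR q ^ 3
   <= INR (Vseq q k) * exp (- (c / INR q ^ 3)).
  rewrite /Rdiv Rmult_assoc; apply: Rmult_le_compat_l => //.
  apply: (Rmult_le_reg_r (INR q ^ 3)) => //.
  rewrite Rmult_assoc Rinv_l; last by lra.
  by rewrite Rmult_1_r Rmult_comm.
apply: Rle_trans step1 _.
have ec := exp_pos (- (c / INR q ^ 3)).
apply: Rle_trans (Rmult_le_compat_r _ _ _ (Rlt_le _ _ ec) IH) _.
rewrite Rmult_assoc -exp_plus; apply: Rmult_le_compat_l; first lra.
apply: exp_le_mono.
rewrite /Eexp S_INR.
have Hc : (INR q - 1) ^ 2 * INR k <= c.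
  rewrite /c; have k0 := pos_INR k; nra.
have : (INR q - 1) ^ 2 * ((INR k + 1) * (INR k + 1 - 1)) / (2 * INR q ^ 3)
     = (INR q - 1) ^ 2 * (INR k * (INR k - 1)) / (2 * INR q ^ 3)
       + (INR q - 1) ^ 2 * INR k / INR q ^ 3 by field; lra.
move=> ->.
have : (INR q - 1) ^ 2 * INR k / INR q ^ 3 <= c / INR q ^ 3.
  apply: Rmult_le_compat_r => //; left; apply: Rinv_0_lt_compat => //.
lra.
Qed.

Lemma ln_le_sub1 t : 0 < t -> ln t <= t - 1.
Proof. by move=> t0; have := exp_ineq1_le (ln t); rewrite exp_ln //; lra. Qed.

Section Analytic.
Variable Q : R.
Hypothesis HQ : 400 <= Q.
Let L := ln (Q + 1).
Let s := sqrt ((Q + 1) * L).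

Lemma L_ge0 : 0 <= L.
Proof. by apply: ln_ge0; lra. Qed.

Lemma key_ineq : 4 * L + s < 69 / 100 * Q.
Proof.
set t := sqrt (Q + 1).
have t2 : t * t = Q + 1 by apply: sqrt_sqrt; lra.
have t20 : 20 <= t.
  rewrite /t -(sqrt_square 20); last lra.
  by apply: sqrt_le_1_alt; lra.
have EL : L = ln t + ln t by rewrite /L -t2 ln_mult; lra.
have Lt : L <= 2 * (t - 1) by have := ln_le_sub1 t ltac:(lra); lra.
have L0 := L_ge0.
set R := 69 / 100 * (t * t - 1) - 8 * (t - 1).
have R0 : 0 < R by rewrite /R; nra.
have s2 : s * s = (Q + 1) * L by apply: sqrt_sqrt; apply: Rmult_le_pos; lra.
have s0 : 0 <= s by apply: sqrt_pos.
have Hs2 : s * s <= t * t * (2 * (t - 1)) by rewrite s2 -t2; apply: Rmult_le_compat_l; lra.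
have Hpoly : t * t * (2 * (t - 1)) < R * R.
  set w := t - 20.
  have w0 : 0 <= w by rewrite /w; lra.
  have Hid : R * R - t * t * (2 * (t - 1)) = 53561 / 10000 + 314219 / 125 * w
      + 2181639 / 5000 * w ^ 2 + 3131 / 125 * w ^ 3 + 4761 / 10000 * w ^ 4.
    by rewrite /R /w; field.
  have := pow_le w 2 w0; have := pow_le w 3 w0; have := pow_le w 4 w0; lra.
have sR : s < R by nra.
rewrite /R in sR; have : Q = t * t - 1 by lra.
move=> EQ; rewrite EQ; lra.
Qed.

Lemma analytic (M : R) : 2 * s <= M -> 1 <= M ->
  Q ^ 3 * exp (- ((Q - 1) ^ 2 * (M * (M - 1)) / (2 * Q ^ 3))) < 2 * (Q - 1).
Proof.
move=> HM M1.
have L0 := L_ge0.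
have s0 : 0 <= s by apply: sqrt_pos.
have s2 : s * s = (Q + 1) * L by apply: sqrt_sqrt; apply: Rmult_le_pos; lra.
have Hk := key_ineq.
set d := (4 * L + s) / Q.
have d069 : d < 69 / 100.
  rewrite /d; apply: (Rmult_lt_reg_r Q); first lra.
  by rewrite /Rdiv Rmult_assoc Rinv_l; lra.
have ed : exp d < 2 by apply: Rle_lt_trans exp069; apply: exp_le_mono; lra.
set E := (Q - 1) ^ 2 * (M * (M - 1)) / (2 * Q ^ 3).
have Q3 : 0 < Q ^ 3 by apply: pow_lt; lra.
have HMM : 2 * s * (2 * s - 1) <= M * (M - 1) by nra.
have HE : 2 * L - d <= E.
  rewrite /E /d.
  have : (Q - 1) ^ 2 * (2 * s * (2 * s - 1)) / (2 * Q ^ 3) <= E.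
    rewrite /E; apply: Rmult_le_compat_r.
      by left; apply: Rinv_0_lt_compat; lra.
    by apply: Rmult_le_compat_l; [apply: pow2_ge_0 | lra].
  suff : 2 * L - (4 * L + s) / Q <= (Q - 1) ^ 2 * (2 * s * (2 * s - 1)) / (2 * Q ^ 3) by rewrite /E; lra.
  have -> : (Q - 1) ^ 2 * (2 * s * (2 * s - 1)) / (2 * Q ^ 3)
          = (Q - 1) ^ 2 * (2 * ((Q + 1) * L) - s) / Q ^ 3.
    by rewrite -s2; field; lra.
  have -> : 2 * L - (4 * L + s) / Q = (2 * L * Q ^ 3 - (4 * L + s) * Q ^ 2) / Q ^ 3.
    by field; lra.
  apply: Rmult_le_compat_r; first by left; apply: Rinv_0_lt_compat.
  have H1 : 0 <= 2 * L * (Q ^ 2 - Q + 1) by apply: Rmult_le_pos; nra.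
  have H2 : 0 <= s * (2 * Q - 1) by apply: Rmult_le_pos; lra.
  have Hid : (Q - 1) ^ 2 * (2 * ((Q + 1) * L) - s) - (2 * L * Q ^ 3 - (4 * L + s) * Q ^ 2)
          = 2 * L * (Q ^ 2 - Q + 1) + s * (2 * Q - 1) by ring.
  lra.
have e2L : exp (2 * L) = (Q + 1) ^ 2.
  by rewrite (_ : 2 * L = L + L) ?exp_plus ?exp_ln /=; try lra; ring.
have eE : (Q + 1) ^ 2 <= exp E * exp d.
  rewrite -exp_plus -e2L; apply: exp_le_mono; lra.
have eEpos := exp_pos E.
have edpos := exp_pos d.
rewrite exp_Ropp.
have Hc : Q ^ 3 <= (Q - 1) * (Q + 1) ^ 2 by nra.
have : Q ^ 3 < 2 * (Q - 1) * exp E.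
  have H3 : (Q - 1) * (Q + 1) ^ 2 <= (Q - 1) * (exp E * exp d) by apply: Rmult_le_compat_l; lra.
  have H4 : (Q - 1) * (exp E * exp d) < (Q - 1) * (exp E * 2).
    apply: Rmult_lt_compat_l; first lra.
    by apply: Rmult_lt_compat_l.
  lra.
move=> H; apply: (Rmult_lt_reg_r (exp E)) => //.
by rewrite Rmult_assoc Rinv_l; lra.
Qed.
End Analytic.

Close Scope R_scope.

Import ssrnat.

Lemma N2n_lt a b : (a < b)%num -> (N.to_nat a < N.to_nat b)%coq_nat.
Proof. lia. Qed.

Lemma small_q q : (2 <= q)%N -> (q < 400)%N -> exists m,
  [/\ (Vseq q m < 2 * (q - 1))%N, ((m.+1 * (q - 1)).+1 < q ^ 3)%N &
      (INR m.+1 <= 2 * sqrt ((INR q + 1) * ln (INR q + 1)) + 2)%R].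
Proof.
move=> q2 q400.
have : check (N.of_nat q).
  apply: (allP checks_ok); rewrite mem_iota q2 /=.
  by rewrite (_ : (2 + 398)%N = 400%N).
rewrite /check; set m := findm _ _ _ _ => /and3P [H1 H2 H3].
exists m; split.
- move/N.ltb_lt: H1 => /N2n_lt; rewrite -Vseq_VN.
  rewrite N2Nat.inj_mul N2Nat.inj_sub Nat2N.id => /ltP.
  by rewrite -mulnE -subnE.
- move/N.ltb_lt: H2 => /N2n_lt.
  rewrite N2Nat.inj_add N2Nat.inj_mul N2Nat.inj_add N2Nat.inj_sub N2n_pow3 !Nat2N.id => /ltP.
  by rewrite -exp3 -!addnE -mulnE -subnE !addn1.
- by move: H3; rewrite nat_N_Z; apply: check_real.
Qed.

Lemma large_q q : (400 <= q)%N -> exists m,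
  [/\ (Vseq q m < 2 * (q - 1))%N, ((m.+1 * (q - 1)).+1 < q ^ 3)%N &
      (INR m.+1 <= 2 * sqrt ((INR q + 1) * ln (INR q + 1)) + 2)%R].
Proof.
move=> q400.
have HQ : (400 <= INR q)%R.
  have := le_INR 400 q (elimT leP q400); rewrite INR_IZR_INZ /=; lra.
set Q := INR q in HQ *.
set s := sqrt ((Q + 1) * ln (Q + 1)).
have s0 : (0 <= s)%R by apply: sqrt_pos.
have [Hz1 Hz2] := archimed (2 * s).
set z := up (2 * s) in Hz1 Hz2.
have z0 : (0 < z)%Z by apply: lt_IZR; lra.
set m := Z.to_nat z.
have EM : INR m = IZR z by rewrite INR_IZR_INZ /m Z2Nat.id //; lia.
have M1 : (1 <= INR m)%R by rewrite EM; apply: IZR_le; lia.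
have q1 : (1 <= q)%N by apply: leq_trans q400.
have HV := @Vseq_real q m q1.
have H2s : (2 * s <= INR m)%R by rewrite EM; lra.
have HA := @analytic Q HQ (INR m) H2s M1.
have Hk := key_ineq Q HQ.
have L0 : (0 <= ln (Q + 1))%R by apply: ln_ge0; lra.
exists m; split.
- apply/ltP; apply: INR_lt.
  rewrite mult_INR subnE minus_INR; last by apply/leP.
  rewrite /Eexp in HV; rewrite (_ : INR 2 = 2%R) // (_ : INR 1 = 1%R) //.
  by apply: Rle_lt_trans HV HA.
- have Hm : (m <= 2 * q)%N.
    apply/leP; apply: INR_le; rewrite mult_INR (_ : INR 2 = 2%R) //.
    rewrite -/Q; fold s in Hk; lra.
  have Hm' : (m.+1 * (q - 1) <= (2 * q).+1 * (q - 1))%N by rewrite leq_mul2r ltnS Hm orbT.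
  apply: leq_ltn_trans (_ : _ <= ((2 * q).+1 * (q - 1)).+1)%N _; first by rewrite ltnS.
  rewrite !expnS expn0 muln1.
  clear -q400; nia.
- rewrite S_INR EM; fold s; lra.
Qed.

Lemma main_bound q : (2 <= q)%N -> exists m,
  [/\ (Vseq q m < 2 * (q - 1))%N, ((m.+1 * (q - 1)).+1 < q ^ 3)%N &
      (INR m.+1 <= 2 * sqrt ((INR q + 1) * ln (INR q + 1)) + 2)%R].
Proof.
move=> q2; case: (ltnP q 400) => H; [exact: small_q | exact: large_q].
Qed.

Lemma has_code_of (F : finFieldType) m : (Vseq #|F| m < 2 * (#|F| - 1))%N ->
  ((m.+1 * (#|F| - 1)).+1 < #|F| ^ 3)%N ->
  exists n, (n <= m.+1)%N /\ has_code 2 3 F n.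
Proof.
move=> H1 H2.
have [S [HS HU Hsz]] := @greedy F m.
have Hs : (size S <= m)%N by case: Hsz => [->|[_ ->]].
have [S' [Hs' Hcov]] := @final F S (leq_ltn_trans HU H1).
have HS' : (size S' <= m.+1)%N by apply: leq_trans Hs' _; rewrite ltnS.
exists (size S'); split => //.
apply: (@code_ok F S' Hcov).
by apply: leq_ltn_trans H2; rewrite ltnS leq_mul2r HS' orbT.
Qed.

Lemma ell_le R r (F : finFieldType) n : has_code R r F n -> (ell R r F <= n)%N.
Proof.
move=> H; rewrite /ell; case: excluded_middle_informative => [Hex|nH]; last by [].
case: ex_minnP => m _ Hmin; apply: Hmin.
by case: excluded_middle_informative.
Qed.

Theorem corollary1 (F : finFieldType) :
  (exists n : nat, has_code 2 3 F n) /\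
  (INR (ell 2 3 F) <= 2 * sqrt ((INR #|F| + 1) * ln (INR #|F| + 1)) + 2)%R.
Proof.
have q2 := @q_ge2 F.
have [m [H1 H2 H3]] := @main_bound _ q2.
have [n [Hn Hc]] := @has_code_of F m H1 H2.
split; first by exists n.
apply: Rle_trans H3; apply: le_INR; apply/leP.
exact: leq_trans (@ell_le _ _ _ _ Hc) Hn.
Qed.
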